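(* There exists a continuous function $f:\mathrm{SO}(4)\to S^3\times S^3$ such that for every rotation $R\in\mathrm{SO}(4)$, $d_4(R,\mathbf{R}_{QQ}(f(R)))\le\pi$.
   Context: Identify $\mathbb{R}^4$ with the quaternions via $(w,x,y,z)\leftrightarrow w+x\mathbf{i}+y\mathbf{j}+z\mathbf{k}$; $S^3$ is the set of unit quaternions. For $(\mathbf{q}_L,\mathbf{q}_R)\in S^3\times S^3$, $\mathbf{R}_{QQ}(\mathbf{q}_L,\mathbf{q}_R)\in\mathrm{SO}(4)$ is the rotation $\mathbf{p}\mapsto\mathbf{q}_L\mathbf{p}\mathbf{q}_R$; every element of $\mathrm{SO}(4)$ is of this form, with $(\mathbf{q}_L,\mathbf{q}_R)$ determined up to overall sign. For unit quaternions let $d_Q(\mathbf{p},\mathbf{q})=\cos^{-1}(\mathbf{p}\cdot\mathbf{q})$. For $R_1=\mathbf{R}_{QQ}(\mathbf{p}_L,\mathbf{p}_R)$ and $R_2=\mathbf{R}_{QQ}(\mathbf{q}_L,\mathbf{q}_R)$, $d_4(R_1,R_2)=\min\{a+b,2\pi-a-b\}+|a-b|$ where $a=d_Q(\mathbf{p}_L,\mathbf{q}_L)$, $b=d_Q(\mathbf{p}_R,\mathbf{q}_R)$ (independent of representatives; equal to $|\theta|+|\phi|$ where $e^{\pm i\theta},e^{\pm i\phi}$ are the eigenvalues of $R_2R_1^{-1}$). *)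

(* Defs.v *)
From HB Require Import structures.
From mathcomp Require Import all_boot all_order all_algebra.
From mathcomp Require Import all_classical all_reals all_analysis.
Set Implicit Arguments. Unset Strict Implicit. Unset Printing Implicit Defensive.
Import Order.TTheory GRing.Theory Num.Theory.
Import numFieldNormedType.Exports.
Local Open Scope classical_set_scope.
Local Open Scope ring_scope.

(* Quaternions w + x i + y j + z k are represented as row vectors (w,x,y,z)
   in 'rV[R]_4 (coordinates 0,1,2,3). *)
Definition quat (R : realType) := 'rV[R]_4.

Definition qc {R : realType} (p : 'rV[R]_4) (k : nat) : R := p ord0 (inord k).

Definition mk4 {R : realType} (a b c d : R) : 'rV[R]_4 :=
  \row_(i < 4) (match val i with 0 => a | 1 => b | 2 => c | _ => d end)%N.

Definition qmul {R : realType} (p q : 'rV[R]_4) : 'rV[R]_4 :=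
  let a1 := qc p 0 in let b1 := qc p 1 in let c1 := qc p 2 in let d1 := qc p 3 in
  let a2 := qc q 0 in let b2 := qc q 1 in let c2 := qc q 2 in let d2 := qc q 3 in
  mk4 (a1*a2 - b1*b2 - c1*c2 - d1*d2)
      (a1*b2 + b1*a2 + c1*d2 - d1*c2)
      (a1*c2 - b1*d2 + c1*a2 + d1*b2)
      (a1*d2 + b1*c2 - c1*b2 + d1*a2).

Definition qdot {R : realType} (p q : 'rV[R]_4) : R := \sum_(i < 4) p ord0 i * q ord0 i.

Definition S3 {R : realType} : set 'rV[R]_4 := [set p | qdot p p = 1].

Definition SO4 {R : realType} : set 'M[R]_4 :=
  [set M | M^T *m M = 1%:M /\ \det M = 1].

(* R_QQ(qL,qR): the matrix (w.r.t. the standard basis, acting on column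
   vectors) of the linear map p |-> qL p qR.  Column j is the image of e_j. *)
Definition RQQ {R : realType} (qL qR : 'rV[R]_4) : 'M[R]_4 :=
  \matrix_(i < 4, j < 4) (qmul (qmul qL (delta_mx ord0 j)) qR) ord0 i.

Definition dQ {R : realType} (p q : 'rV[R]_4) : R := acos (qdot p q).

(* d_4 expressed through quaternion representatives:
   d4Q (pL,pR) (qL,qR) = min{a+b, 2pi-a-b} + |a-b|,
   a = dQ pL qL, b = dQ pR qR. *)
Definition d4Q {R : realType} (P Q : 'rV[R]_4 * 'rV[R]_4) : R :=
  let a := dQ P.1 Q.1 in let b := dQ P.2 Q.2 in
  Num.min (a + b) (2 * pi - a - b) + `|a - b|.

(* Main.v *)
Require Import Defs.
From HB Require Import structures.
From mathcomp Require Import all_boot all_order all_algebra.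
From mathcomp Require Import all_classical all_reals all_analysis.
From mathcomp Require Import ring lra.
Import Order.TTheory GRing.Theory Num.Theory.
Import numFieldNormedType.Exports.
Local Open Scope classical_set_scope.
Local Open Scope ring_scope.

Section S.
Variable R : realType.

Definition colr (M : 'M[R]_4) : 'rV[R]_4 := \row_i M i ord0.

Lemma colr_cont : continuous colr.
Proof.
move=> M. have FF : Filter (nbhs M) by exact: (@nbhs_filter _ M).
apply/cvg_ballP => e e0.
exists (fun i j => ball (M i j) e).
  by move=> i j; exact: nbhsx_ballx.
by move=> N HN; split => // i j; rewrite !mxE; exact: HN.
Qed.

Lemma qcE (p : 'rV[R]_4) : [/\ p ord0 ord0 = qc p 0, p ord0 (lift ord0 ord0) = qc p 1,
  p ord0 (lift ord0 (lift ord0 ord0)) = qc p 2 &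
  p ord0 (lift ord0 (lift ord0 (lift ord0 ord0))) = qc p 3].
Proof.
by rewrite /qc; split; congr (p _ _); apply/val_inj; rewrite /= inordK.
Qed.

Lemma qdotE (p q : 'rV[R]_4) : qdot p q =
  qc p 0 * qc q 0 + qc p 1 * qc q 1 + qc p 2 * qc q 2 + qc p 3 * qc q 3.
Proof.
rewrite /qdot !big_ord_recl big_ord0.
have [a b c d] := qcE p; have [a' b' c' d'] := qcE q.
rewrite a b c d a' b' c' d'; ring.
Qed.

Lemma mk4E (a b c d : R) : [/\ qc (mk4 a b c d) 0 = a, qc (mk4 a b c d) 1 = b,
   qc (mk4 a b c d) 2 = c & qc (mk4 a b c d) 3 = d].
Proof.
have h k : (k < 4)%N -> val (inord k : 'I_4) = k by exact: inordK.
by rewrite /qc !mxE !h. Qed.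

Lemma mk4_0 (a b c d : R) : qc (mk4 a b c d) 0 = a. Proof. by have [] := mk4E a b c d. Qed.
Lemma mk4_1 (a b c d : R) : qc (mk4 a b c d) 1 = b. Proof. by have [] := mk4E a b c d. Qed.
Lemma mk4_2 (a b c d : R) : qc (mk4 a b c d) 2 = c. Proof. by have [] := mk4E a b c d. Qed.
Lemma mk4_3 (a b c d : R) : qc (mk4 a b c d) 3 = d. Proof. by have [] := mk4E a b c d. Qed.

Lemma qmulE (p q : 'rV[R]_4) :
  let a1 := qc p 0 in let b1 := qc p 1 in let c1 := qc p 2 in let d1 := qc p 3 in
  let a2 := qc q 0 in let b2 := qc q 1 in let c2 := qc q 2 in let d2 := qc q 3 in
  [/\ qc (qmul p q) 0 = (a1*a2 - b1*b2 - c1*c2 - d1*d2),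
      qc (qmul p q) 1 = (a1*b2 + b1*a2 + c1*d2 - d1*c2),
      qc (qmul p q) 2 = (a1*c2 - b1*d2 + c1*a2 + d1*b2) &
      qc (qmul p q) 3 = (a1*d2 + b1*c2 - c1*b2 + d1*a2)].
Proof. by rewrite /qmul mk4_0 mk4_1 mk4_2 mk4_3. Qed.

Lemma deltaE : [/\ qc (delta_mx ord0 ord0 : 'rV[R]_4) 0 = 1,
  qc (delta_mx ord0 ord0 : 'rV[R]_4) 1 = 0, qc (delta_mx ord0 ord0 : 'rV[R]_4) 2 = 0 &
  qc (delta_mx ord0 ord0 : 'rV[R]_4) 3 = 0].
Proof.
rewrite /qc !mxE /=.
have h k : (k < 4)%N -> val (inord k : 'I_4) = k by exact: inordK.
have e k : (0 < k < 4)%N -> (inord k == ord0 :> 'I_4) = false.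
  by move=> /andP[k0 k4]; apply/negbTE/eqP => /(congr1 val); rewrite h //= => kk; rewrite kk in k0.
have -> : (inord 0 : 'I_4) = ord0 by apply/val_inj; rewrite h.
by rewrite eqxx !e.
Qed.

Lemma colrE (pL pR : 'rV[R]_4) k :
  qc (colr (RQQ pL pR)) k = qc (qmul (qmul pL (delta_mx ord0 ord0)) pR) k.
Proof. by rewrite /qc /colr /RQQ !mxE. Qed.

Lemma colr_dot (pL pR : 'rV[R]_4) :
  qdot pR (colr (RQQ pL pR)) = qc pL 0 * qdot pR pR.
Proof.
rewrite !qdotE !colrE.
have [-> -> -> ->] := qmulE (qmul pL (delta_mx ord0 ord0)) pR.
have [-> -> -> ->] := qmulE pL (delta_mx ord0 ord0).
have [-> -> -> ->] := deltaE.
ring.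
Qed.

Lemma colr_S3 (M : 'M[R]_4) : M^T *m M = 1%:M -> qdot (colr M) (colr M) = 1.
Proof.
move=> H.
have : (M^T *m M) ord0 ord0 = 1 by rewrite H mxE eqxx.
rewrite mxE => <-; apply: eq_bigr => i _; rewrite !mxE //.
Qed.

End S.

Theorem theorem13 (R : realType) :
  exists f : 'M[R]_4 -> 'rV[R]_4 * 'rV[R]_4,
    {within (@SO4 R), continuous f} /\
    (forall M, SO4 M -> S3 (f M).1 /\ S3 (f M).2) /\
    (forall M, SO4 M ->
       forall pL pR : 'rV[R]_4, S3 pL -> S3 pR -> M = RQQ pL pR ->
         d4Q (pL, pR) (f M) <= pi).
Proof.
exists (fun M => (mk4 1 0 0 0, @colr R M)); split; [|split].
- apply: continuous_subspaceT => M.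
  have F1 : Filter (nbhs M) by exact: nbhs_filter.
  have F2 : Filter (nbhs (mk4 1 0 0 0 : 'rV[R]_4)) by exact: nbhs_filter.
  have F3 : Filter (nbhs (colr R M)) by exact: nbhs_filter.
  apply: (@cvg_pair _ _ _ _ _ _ F1 F2 F3); [exact: cvg_cst | exact: colr_cont].
- move=> M [HM _]; split; rewrite /S3 /=.
    by rewrite qdotE; rewrite mk4_0 mk4_1 mk4_2 mk4_3; ring.
  exact: colr_S3.
- move=> M _ pL pR HL HR ->.
  rewrite /d4Q /dQ /= colr_dot HR mulr1.
  have -> : qdot pL (mk4 1 0 0 0) = qc pL 0.
    by rewrite qdotE; rewrite mk4_0 mk4_1 mk4_2 mk4_3; ring.
  set a := acos _.
  rewrite subrr normr0 addr0 ge_min.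
  by apply/orP; have [h|h] := lerP (a + a) pi; [left|right]; lra.
Qed.
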